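(* Let $k$ be a field and let $X$ be a $\mathcal{T}$-space. Assume that there exist $V_n\in\mathcal{T}$, $n\in\mathbb{N}$, such that $\{V_n\}_{n\in\mathbb{N}}$ is a covering of $X$ in the site $X_{\mathcal{T}_{loc}}$, i.e. for every $W\in\mathcal{T}$ finitely many of the $V_n$ cover $W$. Let $F\in\mathrm{Mod}(k_\mathcal{T})$. Then $F$ is $\mathcal{T}$-flabby if and only if the restriction $\Gamma(X;F)\to\Gamma(U;F)$ is surjective for every $U\in\mathcal{T}_{loc}$.
   Context: Let $X$ be a topological space and $\mathcal{T}$ a family of open subsets of $X$. A $\mathcal{T}$-subset of $X$ is a finite Boolean combination of elements of $\mathcal{T}$; a $\mathcal{T}$-connected subset is a $\mathcal{T}$-subset which is not the disjoint union of two proper $\mathcal{T}$-subsets that are both open and closed in it. $X$ is a $\mathcal{T}$-space if (i) $\mathcal{T}$ is a basis of the topology of $X$ and $\emptyset\in\mathcal{T}$; (ii) $\mathcal{T}$ is closed under finite unions and finite intersections; (iii) every $U\in\mathcal{T}$ has finitely many $\mathcal{T}$-connected components. $X_\mathcal{T}$ is the site whose underlying category is $\mathcal{T}$ (morphisms are inclusions), a family $\{U_i\}\subset\mathcal{T}$ of subsets of $U\in\mathcal{T}$ being a covering of $U$ iff it admits a finite subfamily whose union is $U$; $\mathrm{Mod}(k_\mathcal{T})$ is the category of sheaves of $k$-vector spaces on $X_\mathcal{T}$. $F\in\mathrm{Mod}(k_\mathcal{T})$ is $\mathcal{T}$-flabby if for all $U,V\in\mathcal{T}$ with $U\subseteq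 V$ the restriction $\Gamma(V;F)\to\Gamma(U;F)$ is surjective. Let $\mathcal{T}_{loc}=\{U\subseteq X\text{ open}: U\cap W\in\mathcal{T}\text{ for every }W\in\mathcal{T}\}$ (note $X\in\mathcal{T}_{loc}$). $X_{\mathcal{T}_{loc}}$ is the site on $\mathcal{T}_{loc}$ where $\{U_i\}\subset\mathcal{T}_{loc}$ covers $U\in\mathcal{T}_{loc}$ iff for every $V\in\mathcal{T}$ a finite subfamily covers $U\cap V$. Every $F\in\mathrm{Mod}(k_\mathcal{T})$ extends uniquely to a sheaf on $X_{\mathcal{T}_{loc}}$, and for $U\in\mathcal{T}_{loc}$ one sets $\Gamma(U;F)=\varprojlim_{V\in\mathcal{T}}\Gamma(U\cap V;F)$. *)

(* Defs.v *)
From HB Require Import structures.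
From mathcomp Require Import all_boot all_order all_algebra.
From mathcomp Require Import boolp classical_sets functions cardinality topology.
Set Implicit Arguments. Unset Strict Implicit. Unset Printing Implicit Defensive.
Import GRing.Theory.
Local Open Scope classical_set_scope.
Local Open Scope ring_scope.

Section TSpaces.
Variable X : topologicalType.
Variable T : set (set X).

Inductive Tsubset : set X -> Prop :=
  | Tsub_base U : T U -> Tsubset U
  | Tsub_compl A : Tsubset A -> Tsubset (~` A)
  | Tsub_union A B : Tsubset A -> Tsubset B -> Tsubset (A `|` B)
  | Tsub_inter A B : Tsubset A -> Tsubset B -> Tsubset (A `&` B).

Definition open_in (A B : set X) := exists O, open O /\ B = A `&` O.
Definition closed_in (A B : set X) := exists C, closed C /\ B = A `&` C.

Definition Tconnected (A : set X) :=
  Tsubset A /\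
  ~ (exists B C, Tsubset B /\ Tsubset C /\ B `<` A /\ C `<` A /\
       B `&` C = set0 /\ B `|` C = A /\
       open_in A B /\ closed_in A B /\ open_in A C /\ closed_in A C).

Definition Tcomponent (U C : set X) :=
  C !=set0 /\ C `<=` U /\ Tconnected C /\
  forall D, Tconnected D -> C `<=` D -> D `<=` U -> D = C.

Definition T_space :=
  (forall U, T U -> open U) /\
  (forall O x, open O -> O x -> exists U, T U /\ U x /\ U `<=` O) /\
  T set0 /\
  (forall U V, T U -> T V -> T (U `|` V)) /\
  (forall U V, T U -> T V -> T (U `&` V)) /\
  (forall U, T U -> finite_set (Tcomponent U)).

Definition Tloc (U : set X) := open U /\ forall W, T W -> T (U `&` W).

Variable k : fieldType.

(* A sheaf of k-vector spaces on the site X_T, given by its sections F U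
   (meaningful for U in T) and restriction maps res U V : F V -> F U
   (meaningful for U ⊆ V in T). *)
Definition is_presheaf (F : set X -> lmodType k)
    (res : forall U V : set X, F V -> F U) :=
  (forall U V, T U -> T V -> U `<=` V -> linear (res U V)) /\
  (forall U, T U -> forall s, res U U s = s) /\
  (forall U V W, T U -> T V -> T W -> U `<=` V -> V `<=` W ->
     forall s, res U V (res V W s) = res U W s).

Definition is_sheaf (F : set X -> lmodType k)
    (res : forall U V : set X, F V -> F U) :=
  is_presheaf res /\
  forall (I : Type) (Ui : I -> set X) (U : set X),
    T U -> (forall i, T (Ui i)) -> (forall i, Ui i `<=` U) ->
    (exists J : set I, finite_set J /\ U = \bigcup_(i in J) Ui i) ->
    (forall s t : F U, (forall i, res (Ui i) U s = res (Ui i) U t) -> s = t) /\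
    (forall si : forall i, F (Ui i),
       (forall i j, res (Ui i `&` Ui j) (Ui i) (si i) =
                    res (Ui i `&` Ui j) (Ui j) (si j)) ->
       exists s : F U, forall i, res (Ui i) U s = si i).

Definition T_flabby (F : set X -> lmodType k)
    (res : forall U V : set X, F V -> F U) :=
  forall U V, T U -> T V -> U `<=` V -> forall t : F U, exists s : F V, res U V s = t.

(* Elements of Gamma(U;F) = lim_{V in T} Gamma(U ∩ V; F), for U in T_loc,
   represented as compatible families. *)
Definition loc_section (F : set X -> lmodType k)
    (res : forall U V : set X, F V -> F U) (U : set X)
    (t : forall V : set X, F (U `&` V)) :=
  forall V V', T V -> T V' -> V `<=` V' -> res (U `&` V) (U `&` V') (t V') = t V.

Definition restr_from_X_surjective (F : set X -> lmodType k)
    (res : forall U V : set X, F V -> F U) (U : set X) :=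
  forall t : forall V : set X, F (U `&` V), loc_section res t ->
  exists s : forall V : set X, F (setT `&` V),
    loc_section res s /\
    forall V, T V -> res (U `&` V) (setT `&` V) (s V) = t V.

End TSpaces.

(* Main.v *)
Require Import Defs.
From HB Require Import structures.
From mathcomp Require Import all_boot all_order all_algebra.
From mathcomp Require Import boolp classical_sets functions cardinality topology.
Local Open Scope classical_set_scope.

Fixpoint Wn {X : Type} (V : nat -> set X) (n : nat) : set X :=
  match n with 0 => V 0%N | m.+1 => Wn V m `|` V m.+1 end.

Lemma Wn_mono {X : Type} (V : nat -> set X) {n m : nat} :
  (n <= m)%N -> Wn V n `<=` Wn V m.
Proof.
move=> /subnK <-; elim: (m - n)%N => [|d IH] //=.
by move=> z /IH hz; left.
Qed.

Lemma V_Wn {X : Type} (V : nat -> set X) {n m : nat} :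
  (m <= n)%N -> V m `<=` Wn V n.
Proof.
move=> hmn z hz; apply: (Wn_mono V hmn z).
by case: m {hmn} hz => [|m] //= hz; right.
Qed.

Lemma finite_bound (J : set nat) : finite_set J -> exists N, forall j, J j -> (j <= N)%N.
Proof.
move/finite_seqP=> [s ->]; exists (sumn s).
elim: s => [|a s IH] j //=; rewrite inE => /orP[/eqP->|/IH h].
  exact: leq_addr.
exact: leq_trans h (leq_addl _ _).
Qed.

Lemma dep_seq {A : nat -> Type} {P : forall n, A n -> Prop}
  {Q : forall n, A n -> A n.+1 -> Prop} :
  (exists x, P 0%N x) ->
  (forall n x, P n x -> exists y, P n.+1 y /\ Q n x y) ->
  exists f : forall n, A n, forall n, P n (f n) /\ Q n (f n) (f n.+1).
Proof.
move=> base step.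
pose g := fix g n : {x : A n | P n x} :=
  match n return {x : A n | P n x} with
  | 0 => cid base
  | m.+1 => let h := cid (step m (proj1_sig (g m)) (proj2_sig (g m))) in
            exist _ (proj1_sig h) (proj1 (proj2_sig h))
  end.
exists (fun n => proj1_sig (g n)) => n; split; first exact: proj2_sig (g n).
exact: (proj2 (proj2_sig (cid (step n (proj1_sig (g n)) (proj2_sig (g n)))))).
Qed.

Theorem mainTheorem19 (k : fieldType) (X : topologicalType) (T : set (set X))
  (HT : T_space T)
  (V : nat -> set X) (HV : forall n, T (V n))
  (Hcov : forall W, T W ->
     exists J : set nat, finite_set J /\ W `<=` \bigcup_(n in J) V n)
  (F : set X -> lmodType k) (res : forall U W : set X, F W -> F U)
  (HF : is_sheaf T res) :
  T_flabby T res <-> (forall U, Tloc T U -> restr_from_X_surjective T res U).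
Proof.
case: HT => [Hopen [Hbasis [HT0 [HTU [HTI Hfin]]]]].
case: HF => [[Hlin [Hid Hcomp]] Hsh].
have TsT : forall W, T W -> T (setT `&` W) by move=> W; rewrite setTI.
split.
- move=> Hfl U [HUo HUT] t Ht.
  have TW : forall n, T (Wn V n).
    by elim=> [|n IH] /=; [exact: HV | exact: HTU].
  have base : exists x : F (Wn V 0), res (U `&` Wn V 0) (Wn V 0) x = t (Wn V 0).
    apply: Hfl; [exact: HUT | exact: TW | by move=> z []].
  have step : forall n (x : F (Wn V n)),
      res (U `&` Wn V n) (Wn V n) x = t (Wn V n) ->
      exists y : F (Wn V n.+1),
        res (U `&` Wn V n.+1) (Wn V n.+1) y = t (Wn V n.+1) /\
        res (Wn V n) (Wn V n.+1) y = x.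
    move=> n x Px.
    set A := Wn V n; set B := U `&` Wn V n.+1.
    have TA : T A by exact: TW.
    have TB : T B by exact: HUT.
    have TAB : T (A `|` B) by exact: HTU.
    have TUA : T (U `&` A) by exact: HUT.
    have TAiB : T (A `&` B) by exact: HTI.
    have sAW : A `<=` Wn V n.+1 by move=> z hz; left.
    have sBW : B `<=` Wn V n.+1 by move=> z [].
    have sUAA : U `&` A `<=` A by move=> z [].
    have sBAUA : B `&` A `<=` U `&` A by move=> z [[hU _] hA].
    have TBA : T (B `&` A) by exact: HTI.
    have sABUA : A `&` B `<=` U `&` A by move=> z [hA [hU _]].
    have sUAB : U `&` A `<=` B by move=> z [hU hA]; split => //; exact: sAW.
    pose Ui := fun b : bool => if b then A else B.
    pose si := fun b : bool => if b as b0 return F (Ui b0) then x else t (Wn V n.+1).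
    have hUi : forall i, T (Ui i) by case.
    have hsub : forall i, Ui i `<=` A `|` B by case=> z hz; [left|right].
    have hfin : exists J : set bool, finite_set J /\ A `|` B = \bigcup_(i in J) Ui i.
      exists [set` [:: true; false]]; split; first exact: finite_seq.
      apply/seteqP; split => z.
        by case=> h; [exists true|exists false].
      by case=> -[] _ h; [left|right].
    have [_ glue] := Hsh bool Ui (A `|` B) TAB hUi hsub hfin.
    have [g Hg] : exists g : F (A `|` B), forall i, res (Ui i) (A `|` B) g = si i.
      apply: glue => -[] -[] //=.
      + rewrite -(Hcomp (A `&` B) (U `&` A) A) //.
        rewrite Px -(Hcomp (A `&` B) (U `&` A) B) //.
        by rewrite (Ht A (Wn V n.+1)).
      + rewrite -(Hcomp (B `&` A) (U `&` A) A) //.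
        rewrite Px -(Hcomp (B `&` A) (U `&` A) B) //.
        by rewrite (Ht A (Wn V n.+1)).
    have sABW : A `|` B `<=` Wn V n.+1 by move=> z [/sAW|/sBW].
    have sBAB : B `<=` A `|` B by move=> z hz; right.
    have sAAB : A `<=` A `|` B by move=> z hz; left.
    have [y Hy] : exists y : F (Wn V n.+1), res (A `|` B) (Wn V n.+1) y = g.
      by apply: Hfl => //; exact: TW.
    exists y; split.
    + rewrite -(Hcomp B (A `|` B) (Wn V n.+1)) //; try exact: TW.
      by rewrite Hy (Hg false).
    + rewrite -(Hcomp A (A `|` B) (Wn V n.+1)) //; try exact: TW.
      by rewrite Hy (Hg true).
  have [f Hf] := dep_seq base step.
  have fmono : forall N M, (N <= M)%N -> res (Wn V N) (Wn V M) (f M) = f N.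
    move=> N M /subnK <-; elim: (M - N)%N => [|d IH]; first by rewrite add0n Hid.
    have h1 := Wn_mono V (leqnSn (d + N)).
    have h2 := Wn_mono V (leq_addl d N).
    rewrite addSn -(Hcomp (Wn V N) (Wn V (d + N)) (Wn V (d + N).+1)) //;
      try exact: TW.
    by rewrite (proj2 (Hf _)).
  have key1 : forall A N M, T A -> A `<=` Wn V N -> (N <= M)%N ->
      res A (Wn V N) (f N) = res A (Wn V M) (f M).
    move=> A N M TA sA hNM; rewrite -(fmono N M hNM) Hcomp //.
    exact: Wn_mono.
  have key : forall A N M, T A -> A `<=` Wn V N -> A `<=` Wn V M ->
      res A (Wn V N) (f N) = res A (Wn V M) (f M).
    move=> A N M TA sN sM; case: (leqP N M) => h; first exact: key1.
    by rewrite (key1 A M N) // ltnW.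
  have hN : forall W, T W -> exists N, W `<=` Wn V N.
    move=> W /Hcov [J [/finite_bound [N HN] sW]]; exists N.
    move=> z /sW [j Jj Vz]; exact: (V_Wn V (HN j Jj)).
  pose NN W := match pselect (exists N, W `<=` Wn V N) with
               | left h => proj1_sig (cid h) | right _ => 0%N end.
  have NNP : forall W, T W -> W `<=` Wn V (NN W).
    move=> W TW'; rewrite /NN; case: pselect => [h|nh].
      exact: proj2_sig (cid h).
    by exfalso; apply: nh; exact: hN.
  exists (fun W => res (setT `&` W) (Wn V (NN W)) (f (NN W))); split.
  + move=> V1 V2 T1 T2 s12.
    have sV1 := NNP V1 T1; have sV2 := NNP V2 T2.
    have TV1 := TsT V1 T1; have TV2 := TsT V2 T2.
    have a1 : setT `&` V1 `<=` setT `&` V2 by move=> z [_ h]; split => //; exact: s12.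
    have a2 : setT `&` V2 `<=` Wn V (NN V2) by move=> z [_ h]; exact: sV2.
    have a3 : setT `&` V1 `<=` Wn V (NN V1) by move=> z [_ h]; exact: sV1.
    have a4 : setT `&` V1 `<=` Wn V (NN V2) by move=> z /a1 /a2.
    rewrite Hcomp //; try exact: TW.
    exact: key.
  + move=> V1 T1.
    have sV := NNP V1 T1.
    have TV1 := TsT V1 T1.
    have TU1 : T (U `&` V1) := HUT V1 T1.
    have TUN := HUT _ (TW (NN V1)).
    have b1 : U `&` V1 `<=` setT `&` V1 by move=> z [_ h].
    have b2 : setT `&` V1 `<=` Wn V (NN V1) by move=> z [_ h]; exact: sV.
    have b3 : U `&` V1 `<=` U `&` Wn V (NN V1) by move=> z [hU h]; split => //; exact: sV.
    have b4 : U `&` Wn V (NN V1) `<=` Wn V (NN V1) by move=> z [].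
    rewrite Hcomp //; try exact: TW.
    rewrite -(Hcomp (U `&` V1) (U `&` Wn V (NN V1)) (Wn V (NN V1))) //; try exact: TW.
    by rewrite (proj1 (Hf _)) (Ht V1 (Wn V (NN V1)) T1 (TW _) sV).
- move=> H U W TU TW sUW t.
  have HUl : Tloc T U.
    by split; [exact: Hopen | move=> W' TW'; exact: HTI].
  have Hloc : loc_section T res (fun W' => res (U `&` W') U t).
    move=> V1 V2 T1 T2 s12.
    have := HTI U V1 TU T1; have := HTI U V2 TU T2 => h2 h1.
    have c1 : U `&` V1 `<=` U `&` V2 by move=> z [hU h]; split => //; exact: s12.
    have c2 : U `&` V2 `<=` U by move=> z [].
    by rewrite Hcomp.
  have [s [Hs1 Hs2]] := H U HUl _ Hloc.
  have TUW : T (U `&` W) by exact: HTI.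
  have TsW := TsT W TW.
  have UW : U `<=` U `&` W by move=> z hz; split => //; exact: sUW.
  have d1 : W `<=` setT `&` W by move=> z hz; split.
  have d3 : U `&` W `<=` setT `&` W by move=> z [_ h]; split.
  have d4 : U `&` W `<=` U by move=> z [].
  exists (res W (setT `&` W) (s W)).
  rewrite Hcomp // -(Hcomp U (U `&` W) (setT `&` W)) // Hs2 // Hcomp //.
  exact: Hid.
Qed.
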